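(* Let $p\in\mathbb N$ and $c$ a constant, and consider the modified Bogoyavlensky lattice $$v'_j=(c-v_j)v_j\,(v_{j+1}\cdots v_{j+p}-v_{j-1}\cdots v_{j-p}),\qquad j\in\mathbb Z.$$ Let constants $b_j,d_j$, $j\in\mathbb Z$, satisfy $b_{j+p}=b_j+1$ and $d_{j+p+1}=d_j+c$, and define $$G_j=t(c-v_j)\Bigl(\sum_{s=0}^p v_{j-p+s}\cdots v_{j+s}-c\sum_{s=1}^p v_{j-p+s}\cdots v_{j+s-1}\Bigr)+b_jv_j-d_j.$$ Then the constraint $G_j=0$ (for all $j\in\mathbb Z$) is consistent with the lattice: the total derivative $\frac{d}{dt}G_j$ computed by virtue of the lattice equations (including the explicit dependence on $t$) vanishes whenever $G_k=0$ for all $k\in\mathbb Z$, so that the set of solutions satisfying all constraints $G_j=0$ is invariant under the flow.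
   Context: $f'=df/dt$. *)

(* Defs.v *)
From Stdlib Require Import Reals ZArith.
From Coquelicot Require Import Coquelicot.
Open Scope R_scope.

Fixpoint prodR (n : nat) (f : nat -> R) : R :=
  match n with O => 1 | S m => prodR m f * f m end.

Fixpoint sumR (n : nat) (f : nat -> R) : R :=
  match n with O => 0 | S m => sumR m f + f m end.

Definition bogo_rhs (c : R) (p : nat) (v : Z -> R) (j : Z) : R :=
  (c - v j) * v j *
  (prodR p (fun i => v (j + Z.of_nat (S i))%Z)
   - prodR p (fun i => v (j - Z.of_nat (S i))%Z)).

Definition Gcon (c : R) (p : nat) (b d : Z -> R) (t : R) (v : Z -> R) (j : Z) : R :=
  t * (c - v j) *
  (sumR (S p) (fun s => prodR (S p)
        (fun i => v (j - Z.of_nat p + Z.of_nat s + Z.of_nat i)%Z))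
   - c * sumR p (fun s => prodR p
        (fun i => v (j - Z.of_nat p + Z.of_nat (S s) + Z.of_nat i)%Z)))
  + b j * v j - d j.

(* Main.v *)
Require Import Defs.
From Stdlib Require Import Reals ZArith Lia Lra.
From Coquelicot Require Import Coquelicot.
Open Scope R_scope.

Lemma sumR_ext n f g : (forall i, (i < n)%nat -> f i = g i) -> sumR n f = sumR n g.
Proof. induction n; simpl; intros H; [reflexivity|]. rewrite IHn by (intros; apply H; lia). rewrite H by lia. reflexivity. Qed.
Lemma prodR_ext n f g : (forall i, (i < n)%nat -> f i = g i) -> prodR n f = prodR n g.
Proof. induction n; simpl; intros H; [reflexivity|]. rewrite IHn by (intros; apply H; lia). rewrite H by lia. reflexivity. Qed.
Lemma sumR_add n f g : sumR n (fun i => f i + g i) = sumR n f + sumR n g.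
Proof. induction n; simpl; [ring|]. rewrite IHn; ring. Qed.
Lemma sumR_sub n f g : sumR n (fun i => f i - g i) = sumR n f - sumR n g.
Proof. induction n; simpl; [ring|]. rewrite IHn; ring. Qed.
Lemma sumR_scal n a f : sumR n (fun i => a * f i) = a * sumR n f.
Proof. induction n; simpl; [ring|]. rewrite IHn; ring. Qed.
Lemma sumR_tele n f : sumR n (fun i => f (S i) - f i) = f n - f O.
Proof. induction n; simpl; [ring|]. rewrite IHn; ring. Qed.
Lemma sumR_first n f : sumR (S n) f = f O + sumR n (fun i => f (S i)).
Proof. induction n; simpl in *; [ring|]. rewrite IHn; ring. Qed.
Lemma prodR_first n f : prodR (S n) f = f O * prodR n (fun i => f (S i)).
Proof. induction n; simpl in *; [ring|]. rewrite IHn; ring. Qed.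

Ltac unify_idx f :=
  repeat match goal with
  | |- context [f ?x] => match goal with |- context [f ?y] =>
        assert_fails (constr_eq x y);
        let H := fresh in assert (H : y = x) by lia; rewrite H; clear H end end.

Section Formal.
Variables (al be : nat -> R) (c : R) (p : nat).
Hypothesis H1 : forall x, al x * be (x + p + 1)%nat = be x * al (x + p)%nat.

Definition SS q := sumR (S p) (fun s => al (q + s)%nat) - c * sumR p (fun s => be (q + 1 + s)%nat).
Definition LL q := c * be (q + p + 1)%nat - al (q + p)%nat - c * be q + al q.
Definition DS := sumR (S p) (fun s => al (p+1+s)%nat * sumR (S p) (fun i => LL (1+s+i)%nat))
   - c * sumR p (fun s => be (p+2+s)%nat * sumR p (fun i => LL (2+s+i)%nat)).
Definition Phi m := c * be (p+2+m)%nat - al (p+1+m)%nat.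
Definition Psi m := c * be (p+2+m)%nat - al (p+2+m)%nat.

Ltac ui := unify_idx al; unify_idx be.

Lemma SS_left q : SS q = al (q+p)%nat - sumR p (fun n => c * be (q+1+n)%nat - al (q+n)%nat).
Proof.
  unfold SS. rewrite sumR_sub, sumR_scal. simpl sumR at 1.
  replace (q+p)%nat with (q+p)%nat by lia. ring.
Qed.

Lemma SS_right q : SS q = al q - sumR p (fun n => c * be (q+1+n)%nat - al (q+1+n)%nat).
Proof.
  unfold SS. rewrite sumR_sub, sumR_scal, sumR_first.
  rewrite (sumR_ext p (fun i => al (q + S i)%nat) (fun n => al (q+1+n)%nat)) by (intros; f_equal; lia).
  rewrite Nat.add_0_r. ring.
Qed.

Lemma DS_split : DS = al (p+1+p)%nat * sumR (S p) (fun i => LL (p+1+i)%nat)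
  + sumR p (fun m => al (p+1+m)%nat * LL (1+m)%nat - Phi m * sumR p (fun n => LL (2+m+n)%nat)).
Proof.
  unfold DS. change (sumR (S p) (fun s => al (p+1+s)%nat * sumR (S p) (fun i => LL (1+s+i)%nat)))
    with (sumR p (fun s => al (p+1+s)%nat * sumR (S p) (fun i => LL (1+s+i)%nat)) + al (p+1+p)%nat * sumR (S p) (fun i => LL (1+p+i)%nat)).
  rewrite (sumR_ext (S p) (fun i => LL (1+p+i)%nat) (fun i => LL (p+1+i)%nat)) by (intros; f_equal; lia).
  rewrite <- (sumR_scal p c).
  assert (E: sumR p (fun s => al (p+1+s)%nat * sumR (S p) (fun i => LL (1+s+i)%nat)) - sumR p (fun i => c * (be (p+2+i)%nat * sumR p (fun i0 => LL (2+i+i0)%nat)))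
    = sumR p (fun m => al (p+1+m)%nat * LL (1+m)%nat - Phi m * sumR p (fun n => LL (2+m+n)%nat))).
  { rewrite <- sumR_sub. apply sumR_ext; intros m _. rewrite sumR_first.
    rewrite (sumR_ext p (fun i => LL (1+m+S i)%nat) (fun n => LL (2+m+n)%nat)) by (intros; f_equal; lia).
    rewrite Nat.add_0_r. unfold Phi. ring. }
  rewrite <- E. ring.
Qed.

Definition Hs m := sumR p (fun n => al (p+1+m)%nat * be (p+2+m+n)%nat).
Definition Gs m := sumR p (fun n => al (p+1+m)%nat * al (p+2+m+n)%nat).

Lemma inner m : sumR p (fun n => - Psi m * (c * be (p+2+m+1+n)%nat - al (p+2+m+1+n)%nat)
        + Phi m * (c * be (1+m+1+n)%nat - al (1+m+n)%nat) + Phi m * LL (2+m+n)%nat)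
  = Phi m * (al (1+m+p)%nat - al (1+m)%nat) + c * (Hs (S m) - Hs m)
    + c * al (p+1+m)%nat * (be (p+2+m)%nat - be (p+2+m+p)%nat)
    + c * be (p+2+m)%nat * (al (p+2+m+p)%nat - al (p+2+m)%nat) + (Gs m - Gs (S m)).
Proof.
  rewrite (sumR_ext p _ (fun n =>
     Phi m * ((fun k => al (1+m+k)%nat) (S n) - (fun k => al (1+m+k)%nat) n)
   + c * (al (p+1+S m)%nat * be (p+2+S m+n)%nat - al (p+1+m)%nat * be (p+2+m+n)%nat)
   + (c * al (p+1+m)%nat) * ((fun k => be (p+2+m+k)%nat) n - (fun k => be (p+2+m+k)%nat) (S n))
   + (c * be (p+2+m)%nat) * ((fun k => al (p+2+m+k)%nat) (S n) - (fun k => al (p+2+m+k)%nat) n)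
   + (al (p+1+m)%nat * al (p+2+m+n)%nat - al (p+1+S m)%nat * al (p+2+S m+n)%nat))).
  2:{ intros n _. cbv beta. unfold Phi, Psi, LL. ui. ring. }
  rewrite !sumR_add, !sumR_scal.
  pose proof (sumR_tele p (fun k => al (1+m+k)%nat)) as T1.
  pose proof (sumR_tele p (fun k => be (p+2+m+k)%nat)) as T2.
  pose proof (sumR_tele p (fun k => al (p+2+m+k)%nat)) as T3.
  cbv beta in T1, T2, T3. rewrite !Nat.add_0_r in T1, T2, T3.
  rewrite T1, T3.
  rewrite (sumR_ext p (fun i => be (p+2+m+i)%nat - be (p+2+m+S i)%nat) (fun i => -1 * (be (p+2+m+S i)%nat - be (p+2+m+i)%nat))) by (intros; ring).
  rewrite sumR_scal, T2, !sumR_sub. unfold Hs, Gs. ring.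
Qed.

Definition T0 m := Psi m * (al (p+2+m)%nat - sumR p (fun n => c * be (p+2+m+1+n)%nat - al (p+2+m+1+n)%nat))
   - Phi m * (al (1+m+p)%nat - sumR p (fun n => c * be (1+m+1+n)%nat - al (1+m+n)%nat)).
Definition ee m := be (p+1+m)%nat * al (p+1+m+p)%nat.
Definition ff m := al (p+1+m)%nat * al (p+1+m)%nat.

Lemma T0_pt m : T0 m - (al (p+1+m)%nat * LL (1+m)%nat - Phi m * sumR p (fun n => LL (2+m+n)%nat))
  = (ff m - ff (S m)) + c * (ee (S m) - ee m) + c * (Hs (S m) - Hs m) + (Gs m - Gs (S m)).
Proof.
  assert (E: T0 m - (al (p+1+m)%nat * LL (1+m)%nat - Phi m * sumR p (fun n => LL (2+m+n)%nat))
    = Psi m * al (p+2+m)%nat - Phi m * al (1+m+p)%nat - al (p+1+m)%nat * LL (1+m)%nat +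
      sumR p (fun n => - Psi m * (c * be (p+2+m+1+n)%nat - al (p+2+m+1+n)%nat)
        + Phi m * (c * be (1+m+1+n)%nat - al (1+m+n)%nat) + Phi m * LL (2+m+n)%nat)).
  { rewrite !sumR_add, !sumR_scal. unfold T0. ring. }
  rewrite E, inner.
  pose proof (H1 (1+m)%nat) as Ha. pose proof (H1 (p+1+m)%nat) as Hb.
  assert (Ha2 : c * (al (1+m)%nat * be (1+m+p+1)%nat) = c * (be (1+m)%nat * al (1+m+p)%nat)) by (rewrite Ha; reflexivity).
  assert (Hb2 : c * (al (p+1+m)%nat * be (p+1+m+p+1)%nat) = c * (be (p+1+m)%nat * al (p+1+m+p)%nat)) by (rewrite Hb; reflexivity).
  clear Ha Hb. revert Ha2 Hb2.
  unfold Phi, Psi, LL, ee, ff, Hs, Gs. ui. intros Ha2 Hb2. lra.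
Qed.

Theorem formal_id : DS - (al (p+1+p)%nat - al (p+1)%nat) * SS (p+1)%nat
  = sumR p (fun m => Psi m * SS (p+2+m)%nat - Phi m * SS (1+m)%nat).
Proof.
  rewrite DS_split.
  assert (EA: (al (p+1+p)%nat - al (p+1)%nat) * SS (p+1)%nat =
     al (p+1+p)%nat * (al (p+1+p)%nat - sumR p (fun n => c * be (p+1+1+n)%nat - al (p+1+n)%nat))
   - al (p+1)%nat * (al (p+1)%nat - sumR p (fun n => c * be (p+1+1+n)%nat - al (p+1+1+n)%nat))).
  { rewrite <- SS_left, <- SS_right. ring. }
  rewrite EA.
  rewrite (sumR_ext p (fun m => Psi m * SS (p+2+m)%nat - Phi m * SS (1+m)%nat) T0)
    by (intros; unfold T0; rewrite SS_right, SS_left; reflexivity).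
  assert (EB: sumR p T0 = sumR p (fun m => al (p+1+m)%nat * LL (1+m)%nat - Phi m * sumR p (fun n => LL (2+m+n)%nat))
     + sumR p (fun m => (ff m - ff (S m)) + c * (ee (S m) - ee m) + c * (Hs (S m) - Hs m) + (Gs m - Gs (S m)))).
  { rewrite <- sumR_add. apply sumR_ext; intros m _. rewrite <- T0_pt. ring. }
  rewrite EB. clear EA EB.
  assert (ET: sumR p (fun m => (ff m - ff (S m)) + c * (ee (S m) - ee m) + c * (Hs (S m) - Hs m) + (Gs m - Gs (S m)))
     = (ff O - ff p) + c * (ee p - ee O) + c * (Hs p - Hs O) + (Gs O - Gs p)).
  { rewrite (sumR_ext p _ (fun m => -1 * (ff (S m) - ff m) + c * (ee (S m) - ee m) + c * (Hs (S m) - Hs m) + -1 * (Gs (S m) - Gs m)))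
      by (intros; ring).
    rewrite !sumR_add, !sumR_scal, !sumR_tele. ring. }
  rewrite ET. clear ET.
  change (sumR (S p) (fun i => LL (p+1+i)%nat)) with (sumR p (fun i => LL (p+1+i)%nat) + LL (p+1+p)%nat).
  assert (F: sumR p (fun n => LL (p+1+n)%nat) + sumR p (fun n => c * be (p+1+1+n)%nat - al (p+1+n)%nat)
      - c * sumR p (fun n => be (p+2+p+n)%nat) + sumR p (fun n => al (p+2+p+n)%nat)
      = (al (p+1+p+p)%nat - al (p+1+p)%nat) + c * (be (p+1+p)%nat - be (p+1)%nat)).
  { rewrite <- sumR_scal, <- sumR_add, <- sumR_sub, <- sumR_add.
    pose proof (sumR_tele p (fun k => al (p+1+p+k)%nat)) as U1.
    pose proof (sumR_tele p (fun k => be (p+1+k)%nat)) as U2. cbv beta in U1, U2.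
    rewrite !Nat.add_0_r in U1, U2. rewrite <- U1, <- U2, <- sumR_scal, <- sumR_add.
    apply sumR_ext; intros n _. unfold LL. ui. ring. }
  assert (EK: sumR p (fun n => c * be (p+1+1+n)%nat - al (p+1+1+n)%nat) = c * sumR p (fun n => be (p+2+n)%nat) - sumR p (fun n => al (p+2+n)%nat)).
  { rewrite <- sumR_scal, <- sumR_sub. apply sumR_ext; intros; ui; ring. }
  unfold Hs, Gs. rewrite !sumR_scal.
  unfold ee, ff.
  rewrite !Nat.add_0_r.
  pose proof (H1 (p+1+p)%nat) as Hc.
  assert (Hc2 : c * (al (p+1+p)%nat * be (p+1+p+p+1)%nat) = c * (be (p+1+p)%nat * al (p+1+p+p)%nat)) by (rewrite Hc; reflexivity).
  clear Hc.
  rewrite EK.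
  assert (F2 := f_equal (fun z => al (p+1+p)%nat * z) F). cbv beta in F2.
  clear F EK. assert (EL: LL (p+1+p)%nat = c * be (p+1+p+p+1)%nat - al (p+1+p+p)%nat - c * be (p+1+p)%nat + al (p+1+p)%nat) by reflexivity. rewrite EL. lra.
Qed.
End Formal.

Section XF.
Variables (al be vv bb dd : nat -> R) (c : R) (p : nat).
Hypothesis Hba : forall x, be x * vv (x+p)%nat = al x.
Hypothesis Hab : forall x, vv x * be (x+1)%nat = al x.
Hypothesis Hbb : forall k, bb (k+p)%nat = bb k + 1.
Hypothesis Hdd : forall k, dd (k+p+1)%nat = dd k + c.

Lemma Xpart : sumR p (fun m => be (p+2+m)%nat * ((bb (p+2+m+p)%nat * vv (p+2+m+p)%nat - dd (p+2+m+p)%nat)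
      - (bb (p+1+m)%nat * vv (p+1+m)%nat - dd (p+1+m)%nat)))
  = bb (p+1+p)%nat * (al (p+1+p)%nat - al (p+1)%nat) + SS al be c p (p+1)%nat.
Proof.
  rewrite (sumR_ext p _ (fun m => ((fun k => bb (p+1+k)%nat * al (p+1+k)%nat) (S m) - (fun k => bb (p+1+k)%nat * al (p+1+k)%nat) m)
       + (al (p+2+m)%nat - c * be (p+2+m)%nat))).
  2:{ intros m _. cbv beta.
      pose proof (Hbb (p+2+m)%nat) as E1. pose proof (Hdd (p+1+m)%nat) as E2.
      pose proof (Hba (p+2+m)%nat) as E3. pose proof (Hab (p+1+m)%nat) as E4.
      assert (E3' : bb (p+2+m)%nat * (be (p+2+m)%nat * vv (p+2+m+p)%nat) = bb (p+2+m)%nat * al (p+2+m)%nat) by (rewrite E3; reflexivity).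
      assert (E4' : bb (p+1+m)%nat * (vv (p+1+m)%nat * be (p+1+m+1)%nat) = bb (p+1+m)%nat * al (p+1+m)%nat) by (rewrite E4; reflexivity).
      revert E1 E2 E3 E3' E4 E4'.
      unify_idx al; unify_idx be; unify_idx vv; unify_idx bb; unify_idx dd.
      intros E1 E2 E3 E3' E4 E4'. rewrite E1, E2. lra. }
  rewrite sumR_add.
  pose proof (sumR_tele p (fun k => bb (p+1+k)%nat * al (p+1+k)%nat)) as T. cbv beta in T. rewrite T. clear T.
  unfold SS. rewrite sumR_first.
  pose proof (Hbb (p+1)%nat) as E.
  rewrite !Nat.add_0_r, sumR_sub, sumR_scal.
  rewrite (sumR_ext p (fun i => al (p+1+S i)%nat) (fun m => al (p+2+m)%nat)) by (intros; f_equal; lia).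
  rewrite (sumR_ext p (fun s => be (p+1+1+s)%nat) (fun m => be (p+2+m)%nat)) by (intros; f_equal; lia).
  rewrite E. ring.
Qed.
End XF.

Definition W (v : Z -> R) (a : Z) (n : nat) : R := prodR n (fun i => v (a + Z.of_nat i)%Z).
Lemma W_eq v a a' n : a = a' -> W v a n = W v a' n.
Proof. intros ->; reflexivity. Qed.
Lemma W_S v a n : W v a (S n) = W v a n * v (a + Z.of_nat n)%Z.
Proof. reflexivity. Qed.
Lemma W_Sl v a n : W v a (S n) = v a * W v (a+1)%Z n.
Proof. unfold W; rewrite prodR_first. f_equal; [f_equal; lia | apply prodR_ext; intros; f_equal; lia]. Qed.
Lemma rev_prod v j n : prodR n (fun i => v (j - Z.of_nat (S i))%Z) = W v (j - Z.of_nat n)%Z n.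
Proof.
  induction n. reflexivity.
  change (prodR (S n) (fun i => v (j - Z.of_nat (S i))%Z)) with (prodR n (fun i => v (j - Z.of_nat (S i))%Z) * v (j - Z.of_nat (S n))%Z).
  rewrite IHn, W_Sl. rewrite (W_eq v (j - Z.of_nat (S n) + 1)%Z (j - Z.of_nat n)%Z) by lia. ring.
Qed.
Definition Lz c p v k := (c - v k) * (W v (k+1)%Z p - W v (k - Z.of_nat p)%Z p).
Lemma bogo_eq c p v k : bogo_rhs c p v k = v k * Lz c p v k.
Proof.
  unfold bogo_rhs, Lz. rewrite rev_prod.
  rewrite (prodR_ext p _ (fun i => v (k+1+Z.of_nat i)%Z)) by (intros; f_equal; lia).
  unfold W. ring.
Qed.

Lemma dR_plus f g x df dg : is_derive f x df -> is_derive g x dg -> is_derive (fun y => f y + g y) x (df + dg).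
Proof. intros; apply (is_derive_plus f g); auto. Qed.
Lemma dR_minus f g x df dg : is_derive f x df -> is_derive g x dg -> is_derive (fun y => f y - g y) x (df - dg).
Proof. intros; apply (is_derive_minus f g); auto. Qed.
Lemma dR_mult f g x df dg : is_derive f x df -> is_derive g x dg -> is_derive (fun y => f y * g y) x (df * g x + f x * dg).
Proof. intros; apply (is_derive_mult f g); auto. intros; apply Rmult_comm. Qed.
Lemma dR_const (a x : R) : is_derive (fun _ : R => a) x 0.
Proof. apply (is_derive_const a x). Qed.
Lemma dR_id (x : R) : is_derive (fun y => y) x 1.
Proof. apply (is_derive_id x). Qed.
Lemma dR_eq (f : R -> R) (x l l' : R) : is_derive f x l -> l = l' -> is_derive f x l'.
Proof. intros H ->; exact H. Qed.

Lemma d_lin (a b : R) : is_derive (fun s => a + s * b) 0 b.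
Proof.
  eapply dR_eq. apply dR_plus. apply dR_const. apply dR_mult. apply dR_id. apply dR_const. cbv beta; ring.
Qed.

Lemma d_prod n (x y l : nat -> R) : (forall i, y i = x i * l i) ->
  is_derive (fun s => prodR n (fun i => x i + s * y i)) 0 (prodR n x * sumR n l).
Proof.
  intros Hy. induction n.
  - simpl. eapply dR_eq. apply dR_const. ring.
  - simpl. eapply dR_eq. apply dR_mult. exact IHn. apply d_lin.
    cbv beta. rewrite (prodR_ext n (fun i => x i + 0 * y i) x) by (intros; ring).
    rewrite Hy. ring.
Qed.

Lemma d_sum n (F : nat -> R -> R) (dF : nat -> R) : (forall i, is_derive (F i) 0 (dF i)) ->
  is_derive (fun s => sumR n (fun i => F i s)) 0 (sumR n dF).
Proof.
  intros HF. induction n.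
  - simpl. apply dR_const.
  - simpl. apply dR_plus. exact IHn. apply HF.
Qed.

Definition wv c p v (s : R) k := v k + s * bogo_rhs c p v k.
Definition Brk c p v (s : R) j := sumR (S p) (fun s0 => prodR (S p) (fun i => wv c p v s (j - Z.of_nat p + Z.of_nat s0 + Z.of_nat i)%Z))
  - c * sumR p (fun s0 => prodR p (fun i => wv c p v s (j - Z.of_nat p + Z.of_nat (S s0) + Z.of_nat i)%Z)).

Section Conv.
Variables (c : R) (p : nat) (v : Z -> R) (z0 : Z).
Definition alz n := W v (z0 + Z.of_nat n)%Z (S p).
Definition bez n := W v (z0 + Z.of_nat n)%Z p.

Lemma Sm_SS q : sumR (S p) (fun s => prodR (S p) (fun i => v ((z0 + Z.of_nat q + Z.of_nat p) - Z.of_nat p + Z.of_nat s + Z.of_nat i)%Z))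
   - c * sumR p (fun s => prodR p (fun i => v ((z0 + Z.of_nat q + Z.of_nat p) - Z.of_nat p + Z.of_nat (S s) + Z.of_nat i)%Z))
   = SS alz bez c p q.
Proof.
  unfold SS, alz, bez. f_equal; [|f_equal]; apply sumR_ext; intros; unfold W; apply prodR_ext; intros; f_equal; lia.
Qed.

Lemma Brk0_SS q : Brk c p v 0 (z0 + Z.of_nat q + Z.of_nat p)%Z = SS alz bez c p q.
Proof.
  rewrite <- Sm_SS. unfold Brk, wv. f_equal; [|f_equal]; apply sumR_ext; intros; apply prodR_ext; intros; ring.
Qed.

Lemma Lz_LL q : Lz c p v (z0 + Z.of_nat q + Z.of_nat p)%Z = LL alz bez c p q.
Proof.
  unfold Lz, LL, alz, bez.
  rewrite (W_Sl v (z0 + Z.of_nat (q+p))%Z p), (W_S v (z0 + Z.of_nat q)%Z p).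
  rewrite (W_eq v (z0 + Z.of_nat (q+p+1))%Z (z0 + Z.of_nat q + Z.of_nat p + 1)%Z) by lia.
  rewrite (W_eq v (z0 + Z.of_nat (q+p) + 1)%Z (z0 + Z.of_nat q + Z.of_nat p + 1)%Z) by lia.
  rewrite (W_eq v (z0 + Z.of_nat q + Z.of_nat p - Z.of_nat p)%Z (z0 + Z.of_nat q)%Z) by lia.
  replace (v (z0 + Z.of_nat (q+p))%Z) with (v (z0 + Z.of_nat q + Z.of_nat p)%Z) by (f_equal; lia).
  replace (v (z0 + Z.of_nat q + Z.of_nat p)%Z) with (v (z0 + Z.of_nat q + Z.of_nat p)%Z) by (f_equal; lia).
  ring.
Qed.

Lemma H1z x : alz x * bez (x + p + 1)%nat = bez x * alz (x + p)%nat.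
Proof.
  unfold alz, bez. rewrite (W_S v (z0 + Z.of_nat x)%Z p), (W_Sl v (z0 + Z.of_nat (x+p))%Z p).
  rewrite (W_eq v (z0 + Z.of_nat (x+p) + 1)%Z (z0 + Z.of_nat (x+p+1))%Z) by lia.
  replace (v (z0 + Z.of_nat (x+p))%Z) with (v (z0 + Z.of_nat x + Z.of_nat p)%Z) by (f_equal; lia).
  ring.
Qed.

Lemma Hbaz x : bez x * v (z0 + Z.of_nat (x+p))%Z = alz x.
Proof. unfold alz, bez. rewrite W_S. f_equal. f_equal. lia. Qed.
Lemma Habz x : v (z0 + Z.of_nat x)%Z * bez (x+1)%nat = alz x.
Proof. unfold alz, bez. rewrite W_Sl. f_equal. apply W_eq. lia. Qed.
End Conv.

Lemma Gcon_SS c p v z0 b d t q : Gcon c p b d t v (z0 + Z.of_nat q + Z.of_nat p)%Z =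
  t * (c - v (z0 + Z.of_nat q + Z.of_nat p)%Z) * SS (alz p v z0) (bez p v z0) c p q
  + b (z0 + Z.of_nat q + Z.of_nat p)%Z * v (z0 + Z.of_nat q + Z.of_nat p)%Z - d (z0 + Z.of_nat q + Z.of_nat p)%Z.
Proof. unfold Gcon. rewrite <- Sm_SS. reflexivity. Qed.

Lemma sumR_zero n : sumR n (fun _ => 0) = 0.
Proof. induction n; simpl; [reflexivity| rewrite IHn; ring]. Qed.

Theorem mainTheorem7 (p : nat) (c : R) (b d : Z -> R)
  (hb : forall j : Z, b (j + Z.of_nat p)%Z = b j + 1)
  (hd : forall j : Z, d (j + Z.of_nat p + 1)%Z = d j + c) :
  forall (t : R) (v : Z -> R),
    (forall k : Z, Gcon c p b d t v k = 0) ->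
    forall j : Z,
      is_derive
        (fun s : R => Gcon c p b d (t + s) (fun k => v k + s * bogo_rhs c p v k) j)
        0 0.
Proof.
  intros t v HG j.
  remember (j - Z.of_nat p - Z.of_nat p - 1)%Z as z0 eqn:Hz0.
  assert (HB: is_derive (fun s => Brk c p v s j) 0 (DS (alz p v z0) (bez p v z0) c p)).
  { unfold Brk, wv. eapply dR_eq.
    - apply dR_minus.
      + apply d_sum. intro s0. apply d_prod. intro i. apply bogo_eq.
      + apply dR_mult. apply dR_const. apply d_sum. intro s0. apply d_prod. intro i. apply bogo_eq.
    - cbv beta. unfold DS.
      rewrite (sumR_ext (S p) _ (fun s => alz p v z0 (p+1+s)%nat * sumR (S p) (fun i => LL (alz p v z0) (bez p v z0) c p (1+s+i)%nat))).
      2:{ intros s0 _. f_equal. unfold alz, W; apply prodR_ext; intros; f_equal; lia.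
          apply sumR_ext; intros i _. rewrite <- Lz_LL. f_equal; lia. }
      rewrite (sumR_ext p (fun s0 => prodR p _ * _) (fun s => bez p v z0 (p+2+s)%nat * sumR p (fun i => LL (alz p v z0) (bez p v z0) c p (2+s+i)%nat))).
      2:{ intros s0 _. f_equal. unfold bez, W; apply prodR_ext; intros; f_equal; lia.
          apply sumR_ext; intros i _. rewrite <- Lz_LL. f_equal; lia. }
      ring. }
  change (is_derive (fun s => (t + s) * (c - wv c p v s j) * Brk c p v s j + b j * wv c p v s j - d j) 0 0).
  eapply dR_eq.
  { apply dR_minus; [| apply dR_const].
    apply dR_plus.
    - apply dR_mult; [| exact HB].
      apply dR_mult. apply dR_plus; [apply dR_const | apply dR_id].
      apply dR_minus; [apply dR_const | unfold wv; apply d_lin].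
    - apply dR_mult; [apply dR_const | unfold wv; apply d_lin]. }
  cbv beta.
  set (al := alz p v z0). set (be := bez p v z0).
  assert (EB0 : Brk c p v 0 j = SS al be c p (p+1)%nat).
  { unfold al, be. rewrite <- Brk0_SS. f_equal. lia. }
  assert (EW : wv c p v 0 j = v j) by (unfold wv; ring).
  assert (EK : bogo_rhs c p v j = (c - v j) * (al (p+1+p)%nat - al (p+1)%nat)).
  { rewrite bogo_eq. unfold Lz, al, alz.
    rewrite (W_Sl v (z0 + Z.of_nat (p+1+p))%Z p), (W_S v (z0 + Z.of_nat (p+1))%Z p).
    rewrite (W_eq v (z0 + Z.of_nat (p+1+p) + 1)%Z (j+1)%Z) by lia.
    rewrite (W_eq v (z0 + Z.of_nat (p+1))%Z (j - Z.of_nat p)%Z) by lia.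
    replace (v (z0 + Z.of_nat (p+1+p))%Z) with (v j) by (f_equal; lia).
    replace (v (z0 + Z.of_nat (p+1) + Z.of_nat p)%Z) with (v j) by (f_equal; lia).
    ring. }
  rewrite EB0, EW, EK.
  transitivity ((c - v j) * sumR p (fun m => be (p+2+m)%nat *
     (Gcon c p b d t v (z0 + Z.of_nat (p+2+m) + Z.of_nat p)%Z - Gcon c p b d t v (z0 + Z.of_nat (1+m) + Z.of_nat p)%Z))).
  2:{ rewrite (sumR_ext p _ (fun _ => 0)) by (intros; rewrite !HG; ring). rewrite sumR_zero. ring. }
  pose (vv := fun k : nat => v (z0 + Z.of_nat k)%Z).
  pose (bb := fun k : nat => b (z0 + Z.of_nat k)%Z).
  pose (dd := fun k : nat => d (z0 + Z.of_nat k)%Z).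
  rewrite (sumR_ext p _ (fun m => t * (Psi al be c p m * SS al be c p (p+2+m)%nat - Phi al be c p m * SS al be c p (1+m)%nat)
      + be (p+2+m)%nat * ((bb (p+2+m+p)%nat * vv (p+2+m+p)%nat - dd (p+2+m+p)%nat)
      - (bb (p+1+m)%nat * vv (p+1+m)%nat - dd (p+1+m)%nat)))).
  2:{ intros m _. rewrite !Gcon_SS. fold al be.
      pose proof (Hbaz p v z0 (p+2+m)%nat) as E1. pose proof (Habz p v z0 (p+1+m)%nat) as E2.
      fold al be in E1, E2.
      replace (be (p+1+m+1)%nat) with (be (p+2+m)%nat) in E2 by (f_equal; lia).
      unfold Phi, Psi, vv, bb, dd.
      replace (z0 + Z.of_nat (p+2+m) + Z.of_nat p)%Z with (z0 + Z.of_nat (p+2+m+p))%Z by lia.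
      replace (z0 + Z.of_nat (1+m) + Z.of_nat p)%Z with (z0 + Z.of_nat (p+1+m))%Z by lia.
      rewrite <- E1, <- E2. ring. }
  rewrite sumR_add, sumR_scal.
  rewrite <- (formal_id al be c p (H1z p v z0)).
  assert (Hbb : forall k, bb (k+p)%nat = bb k + 1).
  { intros k; unfold bb. rewrite <- hb. f_equal; lia. }
  assert (Hdd : forall k, dd (k+p+1)%nat = dd k + c).
  { intros k; unfold dd. rewrite <- hd. f_equal; lia. }
  rewrite (Xpart al be vv bb dd c p (Hbaz p v z0) (Habz p v z0) Hbb Hdd).
  replace (bb (p+1+p)%nat) with (b j) by (unfold bb; f_equal; lia).
  ring.
Qed.
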